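(* Let $f,h:\mathbb{R}^p\to\mathbb{R}$ be convex functions and suppose that the set of minimizers of $\mathcal{L}(\beta)=f(\beta)+h(\beta)$ over $\mathbb{R}^p$ is nonempty. Let $D=\mathrm{diag}(d_1,\dots,d_p)$ with all $d_j>0$, let $\gamma\in(0,1)$, and let $\hat\beta^0\in\mathbb{R}^p$ be arbitrary. Consider the alternating linearization method (described in the context) run with the stopping test omitted, so that it generates infinite sequences $\{\hat\beta^k\}$, $\{s_f^k\}$, $\{s_h^k\}$. Then the sequence $\{\hat\beta^k\}$ converges to a minimizer $\beta^*$ of $\mathcal{L}$. Moreover, every accumulation point $(s_f^*,s_h^* )$ of the sequence $\{(s_f^k,s_h^k)\}$ satisfies $s_f^*\in\partial f(\beta^* )$, $s_h^*\in\partial h(\beta^* )$, and $s_f^*+s_h^*=0$.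
   Context: Notation: $\|v\|_D^2=v^TDv$. The alternating linearization method: set $\tilde\beta_f^0=\hat\beta^0$ and choose an arbitrary subgradient $s_f^0\in\partial f(\tilde\beta_f^0)$. At iteration $k$ (suppressing $k$; $\hat\beta$ is the current center, $s_f$ the current subgradient of $f$ at the current point $\tilde\beta_f$): (1) $h$-subproblem: with $\tilde f(\beta)=f(\tilde\beta_f)+s_f^T(\beta-\tilde\beta_f)$, let $\tilde\beta_h$ be the minimizer of $\tilde f(\beta)+h(\beta)+\tfrac12\|\beta-\hat\beta\|_D^2$, and set $s_h=-s_f-D(\tilde\beta_h-\hat\beta)$ (so $s_h\in\partial h(\tilde\beta_h)$). (2) $f$-subproblem: with $\tilde h(\beta)=h(\tilde\beta_h)+s_h^T(\beta-\tilde\beta_h)$, let the new $\tilde\beta_f$ be the minimizer of $f(\beta)+\tilde h(\beta)+\tfrac12\|\beta-\hat\beta\|_D^2$, and set the new $s_f=-s_h-D(\tilde\beta_f-\hat\beta)$ (so $s_f\in\partial f(\tilde\beta_f)$). (3) Update step: if $f(\tilde\beta_f)+h(\tilde\beta_f)\le(1-\gamma)\big[f(\hat\beta)+h(\hat\beta)\big]+\gamma\big[f(\tilde\beta_f)+\tilde h(\tilde\beta_f)\big]$, then set $\hat\beta\leftarrow\tilde\beta_f$; otherwise $\hat\beta$ is unchanged. The values after iteration $k$ are $\hat\beta^{k}$, $s_f^k$, $s_h^k$. (The stopping test, which would terminate when $f(\tilde\beta_f)+\tilde h(\tilde\beta_f)\ge f(\hat\beta)+h(\hat\beta)-\varepsilon$,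 is not applied.) *)

(* Defs.v *)
From Stdlib Require Import Reals.
From mathcomp Require Import all_boot.
Set Implicit Arguments.
Unset Strict Implicit.
Unset Printing Implicit Defensive.
Local Open Scope R_scope.

Definition vec (p : nat) := 'I_p -> R.

Definition vadd p (u v : vec p) : vec p := fun i => u i + v i.
Definition vsub p (u v : vec p) : vec p := fun i => u i - v i.
Definition vscale p (a : R) (u : vec p) : vec p := fun i => a * u i.

Definition dot p (u v : vec p) : R := \big[Rplus/0]_(i < p) (u i * v i).

(* D = diag(d); Dmul d v = D v ;  normD2 d v = ||v||_D^2 = v^T D v *)
Definition Dmul p (d v : vec p) : vec p := fun i => d i * v i.
Definition normD2 p (d v : vec p) : R := dot v (Dmul d v).

Definition convex_fun p (f : vec p -> R) : Prop :=
  forall (x y : vec p) (t : R), 0 <= t <= 1 ->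
    f (vadd (vscale t x) (vscale (1 - t) y)) <= t * f x + (1 - t) * f y.

Definition subgrad p (f : vec p -> R) (x s : vec p) : Prop :=
  forall y : vec p, f x + dot s (vsub y x) <= f y.

Definition is_minimizer p (F : vec p -> R) (x : vec p) : Prop :=
  forall y : vec p, F x <= F y.

(* One iteration (k -> k+1) of the alternating linearization method,
   starting from center bhat k, current point bf k and subgradient sf k;
   produces bh (k+1), sh (k+1), bf (k+1), sf (k+1), bhat (k+1). *)
Definition alin_step p (f h : vec p -> R) (d : vec p) (gamma : R)
  (bhat bf bh sf sh : nat -> vec p) (k : nat) : Prop :=
  let c := bhat k in
  let ftil := fun b => f (bf k) + dot (sf k) (vsub b (bf k)) in
  is_minimizer (fun b => ftil b + h b + / 2 * normD2 d (vsub b c)) (bh (S k)) /\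
  sh (S k) = vsub (vscale (-1) (sf k)) (Dmul d (vsub (bh (S k)) c)) /\
  let htil := fun b => h (bh (S k)) + dot (sh (S k)) (vsub b (bh (S k))) in
  is_minimizer (fun b => f b + htil b + / 2 * normD2 d (vsub b c)) (bf (S k)) /\
  sf (S k) = vsub (vscale (-1) (sh (S k))) (Dmul d (vsub (bf (S k)) c)) /\
  (f (bf (S k)) + h (bf (S k)) <=
     (1 - gamma) * (f c + h c) + gamma * (f (bf (S k)) + htil (bf (S k))) ->
   bhat (S k) = bf (S k)) /\
  (~ (f (bf (S k)) + h (bf (S k)) <=
     (1 - gamma) * (f c + h c) + gamma * (f (bf (S k)) + htil (bf (S k)))) ->
   bhat (S k) = c).

Definition accum_point2 p (u v : nat -> vec p) (a b : vec p) : Prop :=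
  forall eps : R, 0 < eps -> forall N : nat, exists k : nat, (N <= k)%nat /\
    forall i : 'I_p, Rabs (u k i - a i) < eps /\ Rabs (v k i - b i) < eps.

(* Main.v *)
Require Import Defs.
From HB Require Import structures.
From Stdlib Require Import Reals Lra Lia Psatz FunctionalExtensionality.
From mathcomp Require Import all_boot.
From mathcomp Require Import zify.
From Stdlib Require Import ClassicalEpsilon.
Set Implicit Arguments.
Unset Strict Implicit.
Local Open Scope R_scope.
HB.instance Definition _ := Monoid.isComLaw.Build R 0 Rplus (fun x y z => esym (Rplus_assoc x y z)) Rplus_comm Rplus_0_l.

Lemma sumD p (F G : 'I_p -> R) : \big[Rplus/0]_(i<p) (F i + G i) = \big[Rplus/0]_(i<p) F i + \big[Rplus/0]_(i<p) G i.
Proof. by rewrite big_split. Qed.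
Lemma sumZ p a (F : 'I_p -> R) : \big[Rplus/0]_(i<p) (a * F i) = a * \big[Rplus/0]_(i<p) F i.
Proof. elim/big_rec2: _ => [|i x y _ ->]; rewrite /=; ring. Qed.
Lemma sumN p (F : 'I_p -> R) : \big[Rplus/0]_(i<p) (- F i) = - \big[Rplus/0]_(i<p) F i.
Proof. elim/big_rec2: _ => [|i x y _ ->]; rewrite /=; ring. Qed.
Lemma sumB p (F G : 'I_p -> R) : \big[Rplus/0]_(i<p) (F i - G i) = \big[Rplus/0]_(i<p) F i - \big[Rplus/0]_(i<p) G i.
Proof. unfold Rminus. by rewrite sumD sumN. Qed.
Lemma sum_le p (F G : 'I_p -> R) : (forall i, F i <= G i) -> \big[Rplus/0]_(i<p) F i <= \big[Rplus/0]_(i<p) G i.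
Proof. move=> H. elim/big_ind2: _ => //; [lra| move=> *; lra]. Qed.
Lemma sum_ge0 p (F : 'I_p -> R) : (forall i, 0 <= F i) -> 0 <= \big[Rplus/0]_(i<p) F i.
Proof. move=> H. elim/big_ind: _ => //; [lra| move=> *; lra]. Qed.
Lemma sum_single p (F : 'I_p -> R) j : (forall i, 0 <= F i) -> F j <= \big[Rplus/0]_(i<p) F i.
Proof. move=> H. rewrite (bigD1 j) //=.
 have: 0 <= \big[Rplus/0]_(i < p | i != j) F i by elim/big_ind: _ => //; [lra| move=> *; lra].
 set X := \big[Rplus/0]_(i < p | i != j) F i. change (0 <= X -> F j <= F j + X). move=> ?; lra. Qed.

Ltac sumeq := repeat match goal with x := _ |- _ => subst x end; unfold dot, normD2, Dmul, vsub, vadd, vscale;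
  repeat progress (rewrite -?sumZ -?sumN -?sumD -?sumB); apply eq_bigr => ? _; first [ring | field].

Lemma test p (a b c : vec p) t : dot a (vadd b c) + t * dot a b = (1+t) * dot a b + dot a c.
Proof. sumeq. Qed.

Lemma normD2_ge0 p (d v : vec p) : (forall i, 0 < d i) -> 0 <= normD2 d v.
Proof. move=> Hd. unfold normD2, dot, Dmul. apply sum_ge0 => i.
 have := Hd i. move=> h. nra. Qed.

Lemma normD2_coord p (d v : vec p) j : (forall i, 0 < d i) -> d j * (v j * v j) <= normD2 d v.
Proof. move=> Hd. unfold normD2, dot, Dmul.
 have -> : d j * (v j * v j) = v j * (d j * v j) by ring.
 apply (@sum_single p (fun i => v i * (d i * v i)) j) => i. have := Hd i. move=> h. nra. Qed.

Lemma lim_t_zero A Q : 0 <= Q -> (forall t, 0 < t < 1 -> 0 <= A + t * Q) -> 0 <= A.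
Proof. move=> HQ H. destruct (Rle_or_lt 0 A) as [h|h]; first done.
 set t := (- A) / (2 * (Q - A + 1)).
 have Ht: 0 < t < 1. { unfold t. split. apply Rdiv_lt_0_compat; lra.
   apply (Rmult_lt_reg_r (2 * (Q - A + 1))). lra. field_simplify; lra. }
 have := H t Ht. unfold t.
 have: (- A) / (2 * (Q - A + 1)) * Q <= (- A) / 2.
 { apply (Rmult_le_reg_r (2 * (Q - A + 1))). lra. field_simplify; try lra. nra. }
 lra. Qed.

Lemma opt_sub p (g : vec p -> R) (d a z c b : vec p) :
 convex_fun g -> (forall i, 0 < d i) ->
 (forall y, g b + dot a (vsub b z) + /2 * normD2 d (vsub b c) <=
            g y + dot a (vsub y z) + /2 * normD2 d (vsub y c)) ->
 subgrad g b (vsub (vscale (-1) a) (Dmul d (vsub b c))).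
Proof.
 move=> Hc Hd Hm y.
 set X := dot a (vsub y b) + dot (Dmul d (vsub b c)) (vsub y b).
 have E1 : dot (vsub (vscale (-1) a) (Dmul d (vsub b c))) (vsub y b) = - X by unfold X; sumeq.
 rewrite E1.
 have Q0 := normD2_ge0 (vsub y b) Hd.
 suff: 0 <= g y - g b + X by lra.
 apply (lim_t_zero (Q := /2 * normD2 d (vsub y b))); first lra.
 move=> t Ht.
 set yt := vadd (vscale t y) (vscale (1 - t) b).
 have Hcv := Hc y b t (conj (Rlt_le _ _ (proj1 Ht)) (Rlt_le _ _ (proj2 Ht))).
 have Hmt := Hm yt.
 have E2 : dot a (vsub yt z) + /2 * normD2 d (vsub yt c) - dot a (vsub b z) - /2 * normD2 d (vsub b c)
   = t * X + t * (t * (/2 * normD2 d (vsub y b)))  by unfold yt, X; sumeq.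
 fold yt in Hcv.
 have: 0 <= t * (g y - g b + X + t * (/ 2 * normD2 d (vsub y b))) by nra.
 move=> h. apply (Rmult_le_reg_l t). lra. lra.
Qed.

Definition AL p (f h : vec p -> R) (d : vec p) (gamma : R) (bhat bf bh sf sh : nat -> vec p) : Prop :=
  convex_fun f /\ convex_fun h /\ (forall i, 0 < d i) /\ 0 < gamma < 1 /\
  subgrad f (bf 0%nat) (sf 0%nat) /\ (forall k, alin_step f h d gamma bhat bf bh sf sh k).

Definition Lf p (f h : vec p -> R) x := f x + h x.
Definition hl p (h : vec p -> R) (bh sh : nat -> vec p) k x :=
  h (bh (S k)) + dot (sh (S k)) (vsub x (bh (S k))).
Definition Mv p (f h : vec p -> R) (bf bh sh : nat -> vec p) k :=
  f (bf (S k)) + hl h bh sh k (bf (S k)).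
Definition ev p (d : vec p) (bhat bf : nat -> vec p) k := normD2 d (vsub (bf (S k)) (bhat k)).
Definition av p (f h : vec p -> R) d (bhat bf bh sf : nat -> vec p) k :=
  f (bf k) + dot (sf k) (vsub (bh (S k)) (bf k)) + h (bh (S k)) + /2 * normD2 d (vsub (bh (S k)) (bhat k)).

Lemma normD2_self p (d c : vec p) : normD2 d (vsub c c) = 0.
Proof. unfold normD2, dot, Dmul, vsub. rewrite big1 // => i _. ring. Qed.

Lemma step_unfold p f h d gamma (bhat bf bh sf sh : nat -> vec p) k :
  alin_step f h d gamma bhat bf bh sf sh k ->
  (forall y, f (bf k) + dot (sf k) (vsub (bh (S k)) (bf k)) + h (bh (S k)) + /2 * normD2 d (vsub (bh (S k)) (bhat k))
     <= f (bf k) + dot (sf k) (vsub y (bf k)) + h y + /2 * normD2 d (vsub y (bhat k))) /\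
  sh (S k) = vsub (vscale (-1) (sf k)) (Dmul d (vsub (bh (S k)) (bhat k))) /\
  (forall y, f (bf (S k)) + hl h bh sh k (bf (S k)) + /2 * normD2 d (vsub (bf (S k)) (bhat k))
     <= f y + hl h bh sh k y + /2 * normD2 d (vsub y (bhat k))) /\
  sf (S k) = vsub (vscale (-1) (sh (S k))) (Dmul d (vsub (bf (S k)) (bhat k))) /\
  (Lf f h (bf (S k)) <= (1 - gamma) * Lf f h (bhat k) + gamma * Mv f h bf bh sh k -> bhat (S k) = bf (S k)) /\
  (~ Lf f h (bf (S k)) <= (1 - gamma) * Lf f h (bhat k) + gamma * Mv f h bf bh sh k -> bhat (S k) = bhat k).
Proof. unfold alin_step, is_minimizer, Lf, Mv, hl. cbv zeta. tauto. Qed.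

Lemma sub_h p f h d gamma (bhat bf bh sf sh : nat -> vec p) k :
  AL f h d gamma bhat bf bh sf sh -> subgrad h (bh (S k)) (sh (S k)).
Proof. move=> [Hf [Hh [Hd [Hg [H0 Hs]]]]].
 have [Hm1 [E1 _]] := step_unfold (Hs k). rewrite E1.
 apply (opt_sub (z := bf k)) => // y. have := Hm1 y. lra. Qed.

Lemma sub_f p f h d gamma (bhat bf bh sf sh : nat -> vec p) k :
  AL f h d gamma bhat bf bh sf sh -> subgrad f (bf k) (sf k).
Proof. move=> HA. have [Hf [Hh [Hd [Hg [H0 Hs]]]]] := HA. case: k => [|k] //.
 have [_ [_ [Hm2 [E2 _]]]] := step_unfold (Hs k). rewrite E2.
 apply (opt_sub (z := bh (S k))) => // y. have := Hm2 y. unfold hl. lra. Qed.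

Lemma hl_le p f h d gamma (bhat bf bh sf sh : nat -> vec p) k x :
  AL f h d gamma bhat bf bh sf sh -> hl h bh sh k x <= h x.
Proof. move=> HA. have := sub_h k HA. unfold hl. move=> H. exact: H. Qed.

Lemma S4 p f h d gamma (bhat bf bh sf sh : nat -> vec p) k :
  AL f h d gamma bhat bf bh sf sh -> av f h d bhat bf bh sf k <= Lf f h (bhat k).
Proof. move=> HA. have [Hf [Hh [Hd [Hg [H0 Hs]]]]] := HA.
 have [Hm1 _] := step_unfold (Hs k). have := Hm1 (bhat k). rewrite normD2_self.
 have := sub_f k HA (bhat k). unfold av, Lf. lra. Qed.

Lemma S5 p f h d gamma (bhat bf bh sf sh : nat -> vec p) k :
  AL f h d gamma bhat bf bh sf sh -> Mv f h bf bh sh k + /2 * ev d bhat bf k <= Lf f h (bhat k).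
Proof. move=> HA. have [Hf [Hh [Hd [Hg [H0 Hs]]]]] := HA.
 have [_ [_ [Hm2 _]]] := step_unfold (Hs k). have := Hm2 (bhat k). rewrite normD2_self.
 have := hl_le k (bhat k) HA. unfold Mv, ev, Lf. lra. Qed.

Lemma S6 p f h d gamma (bhat bf bh sf sh : nat -> vec p) k :
  AL f h d gamma bhat bf bh sf sh -> av f h d bhat bf bh sf k <= Mv f h bf bh sh k + /2 * ev d bhat bf k.
Proof. move=> HA. have [Hf [Hh [Hd [Hg [H0 Hs]]]]] := HA.
 have [_ [E1 _]] := step_unfold (Hs k).
 set x := bf (S k). set b := bh (S k). set c := bhat k.
 have I : dot (sf k) (vsub x (bf k)) + dot (sh (S k)) (vsub x b) + /2 * normD2 d (vsub x c)
   - dot (sf k) (vsub b (bf k)) - /2 * normD2 d (vsub b c) = /2 * normD2 d (vsub x b).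
 { rewrite E1. sumeq. }
 have := normD2_ge0 (vsub x b) Hd. have := sub_f k HA x.
 unfold av, Mv, ev, hl. fold x b c. lra. Qed.

Lemma S7 p f h d gamma (bhat bf bh sf sh : nat -> vec p) k x :
  AL f h d gamma bhat bf bh sf sh ->
  Mv f h bf bh sh k - dot (Dmul d (vsub (bf (S k)) (bhat k))) (vsub x (bf (S k))) <= f x + hl h bh sh k x.
Proof. move=> HA. have [Hf [Hh [Hd [Hg [H0 Hs]]]]] := HA.
 have [_ [_ [_ [E2 _]]]] := step_unfold (Hs k).
 have I : dot (sf (S k)) (vsub x (bf (S k))) + dot (sh (S k)) (vsub x (bh (S k)))
    - dot (sh (S k)) (vsub (bf (S k)) (bh (S k)))
    = - dot (Dmul d (vsub (bf (S k)) (bhat k))) (vsub x (bf (S k))).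
 { rewrite E2. sumeq. }
 have := sub_f (S k) HA x. unfold Mv, hl. lra. Qed.

Lemma S8 p f h d gamma (bhat bf bh sf sh : nat -> vec p) k :
  AL f h d gamma bhat bf bh sf sh -> bhat (S k) = bhat k ->
  av f h d bhat bf bh sf (S k) = Mv f h bf bh sh k + /2 * ev d bhat bf k
    + /2 * normD2 d (vsub (bh (S (S k))) (bf (S k))) + (h (bh (S (S k))) - hl h bh sh k (bh (S (S k)))).
Proof. move=> HA Ec. have [Hf [Hh [Hd [Hg [H0 Hs]]]]] := HA.
 have [_ [_ [_ [E2 _]]]] := step_unfold (Hs k).
 have I1 : dot (sf (S k)) (vsub (bh (S (S k))) (bf (S k))) + dot (sh (S k)) (vsub (bh (S (S k))) (bh (S k)))
    + /2 * normD2 d (vsub (bh (S (S k))) (bhat k))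
   = dot (sh (S k)) (vsub (bf (S k)) (bh (S k))) + /2 * normD2 d (vsub (bf (S k)) (bhat k))
     + /2 * normD2 d (vsub (bh (S (S k))) (bf (S k))).
 { rewrite E2. sumeq. }
 unfold av, Mv, ev, hl. rewrite Ec. lra. Qed.

Lemma S8t p (f h : vec p -> R) gamma (bhat bf bh sh : nat -> vec p) k :
  ~ Lf f h (bf (S k)) <= (1 - gamma) * Lf f h (bhat k) + gamma * Mv f h bf bh sh k ->
  (1 - gamma) * (Lf f h (bhat k) - Mv f h bf bh sh k) < h (bf (S k)) - hl h bh sh k (bf (S k)).
Proof. unfold Lf, Mv. move=> H. lra. Qed.

Lemma S6b p f h d gamma (bhat bf bh sf sh : nat -> vec p) k :
  AL f h d gamma bhat bf bh sf sh -> av f h d bhat bf bh sf k + /2 * normD2 d (vsub (bf (S k)) (bh (S k)))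
     <= Mv f h bf bh sh k + /2 * ev d bhat bf k.
Proof. move=> HA. have [Hf [Hh [Hd [Hg [H0 Hs]]]]] := HA.
 have [_ [E1 _]] := step_unfold (Hs k).
 have I : dot (sf k) (vsub (bf (S k)) (bf k)) + dot (sh (S k)) (vsub (bf (S k)) (bh (S k))) + /2 * normD2 d (vsub (bf (S k)) (bhat k))
   - dot (sf k) (vsub (bh (S k)) (bf k)) - /2 * normD2 d (vsub (bh (S k)) (bhat k)) = /2 * normD2 d (vsub (bf (S k)) (bh (S k))).
 { rewrite E1. sumeq. }
 have := sub_f k HA (bf (S k)).
 unfold av, Mv, ev, hl. lra. Qed.

Lemma S5b p f h d gamma (bhat bf bh sf sh : nat -> vec p) k :
  AL f h d gamma bhat bf bh sf sh -> Mv f h bf bh sh k + ev d bhat bf k <= Lf f h (bhat k).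
Proof. move=> HA. have := S7 k (bhat k) HA. have := hl_le k (bhat k) HA.
 have I : dot (Dmul d (vsub (bf (S k)) (bhat k))) (vsub (bhat k) (bf (S k))) = - ev d bhat bf k.
 { unfold ev. sumeq. }
 unfold Lf. lra. Qed.

Lemma S9 p f h d gamma (bhat bf bh sf sh : nat -> vec p) k :
  AL f h d gamma bhat bf bh sf sh -> bhat (S k) = bf (S k) ->
  Mv f h bf bh sh k - /2 * ev d bhat bf k <= av f h d bhat bf bh sf (S k).
Proof. move=> HA Ec. have [Hf [Hh [Hd [Hg [H0 Hs]]]]] := HA.
 have [_ [_ [_ [E2 _]]]] := step_unfold (Hs k).
 have I : dot (sf (S k)) (vsub (bh (S (S k))) (bf (S k))) + dot (sh (S k)) (vsub (bh (S (S k))) (bh (S k)))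
   - dot (sh (S k)) (vsub (bf (S k)) (bh (S k)))
   + /2 * normD2 d (vsub (bh (S (S k))) (bf (S k))) + /2 * normD2 d (vsub (bf (S k)) (bhat k))
   = /2 * normD2 d (vsub (vsub (bh (S (S k))) (bf (S k))) (vsub (bf (S k)) (bhat k))).
 { rewrite E2. sumeq. }
 have Z := normD2_ge0 (vsub (vsub (bh (S (S k))) (bf (S k))) (vsub (bf (S k)) (bhat k))) Hd.
 have Hhl := hl_le k (bh (S (S k))) HA.
 unfold av, Mv, ev. rewrite Ec. move: Hhl. unfold hl. lra. Qed.

Definition vk p (f h : vec p -> R) (bhat bf bh sh : nat -> vec p) k := Lf f h (bhat k) - Mv f h bf bh sh k.
Definition Gk p (f h : vec p -> R) d (bhat bf bh sf : nat -> vec p) k := Lf f h (bhat k) - av f h d bhat bf bh sf k.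
Definition Pk p (f h : vec p -> R) d gamma (bhat bf bh sf : nat -> vec p) Ls k :=
  Gk f h d bhat bf bh sf k + 4 / gamma * (Lf f h (bhat k) - Ls).

Lemma step_cases p f h d gamma (bhat bf bh sf sh : nat -> vec p) k :
  AL f h d gamma bhat bf bh sf sh ->
  (bhat (S k) = bf (S k) /\ Lf f h (bf (S k)) <= (1 - gamma) * Lf f h (bhat k) + gamma * Mv f h bf bh sh k) \/
  (bhat (S k) = bhat k /\ ~ Lf f h (bf (S k)) <= (1 - gamma) * Lf f h (bhat k) + gamma * Mv f h bf bh sh k).
Proof. move=> [_ [_ [_ [_ [_ Hs]]]]]. have [_ [_ [_ [_ [H1 H2]]]]] := step_unfold (Hs k).
 case: (Rle_dec (Lf f h (bf (S k))) ((1 - gamma) * Lf f h (bhat k) + gamma * Mv f h bf bh sh k)) => H.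
 - left; auto. - right; auto. Qed.

Lemma v_ge p f h d gamma (bhat bf bh sf sh : nat -> vec p) k :
  AL f h d gamma bhat bf bh sf sh -> ev d bhat bf k <= vk f h bhat bf bh sh k.
Proof. move=> HA. have := S5b k HA. unfold vk. lra. Qed.

Lemma ev_ge0 p f h d gamma (bhat bf bh sf sh : nat -> vec p) k :
  AL f h d gamma bhat bf bh sf sh -> 0 <= ev d bhat bf k.
Proof. move=> [_ [_ [Hd _]]]. unfold ev. exact: normD2_ge0. Qed.

Lemma L_mono p f h d gamma (bhat bf bh sf sh : nat -> vec p) k :
  AL f h d gamma bhat bf bh sf sh -> Lf f h (bhat (S k)) <= Lf f h (bhat k).
Proof. move=> HA. have Hg := proj1 (proj2 (proj2 (proj2 HA))).
 have := v_ge k HA. have := ev_ge0 k HA.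
 case: (step_cases k HA) => [[E T]|[E T]]; rewrite E; last lra.
 unfold vk. move=> *. nra. Qed.

Lemma G_ge0 p f h d gamma (bhat bf bh sf sh : nat -> vec p) k :
  AL f h d gamma bhat bf bh sf sh -> 0 <= Gk f h d bhat bf bh sf k.
Proof. move=> HA. have := S4 k HA. unfold Gk. lra. Qed.

Lemma P_null p f h d gamma (bhat bf bh sf sh : nat -> vec p) Ls k :
  AL f h d gamma bhat bf bh sf sh -> bhat (S k) = bhat k ->
    /2 * normD2 d (vsub (bh (S (S k))) (bf (S k))) + (h (bh (S (S k))) - hl h bh sh k (bh (S (S k))))
      <= Pk f h d gamma bhat bf bh sf Ls k - Pk f h d gamma bhat bf bh sf Ls (S k).
Proof. move=> HA E. have H6 := S6b k HA. have Hd := proj1 (proj2 (proj2 HA)).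
 have Z := normD2_ge0 (vsub (bf (S k)) (bh (S k))) Hd.
 have H8 := S8 (k:=k) HA E. unfold Pk, Gk. rewrite H8 E. lra. Qed.

Lemma P_step p f h d gamma (bhat bf bh sf sh : nat -> vec p) Ls k :
  AL f h d gamma bhat bf bh sf sh -> (forall y, Ls <= Lf f h y) ->
  Pk f h d gamma bhat bf bh sf Ls (S k) <= Pk f h d gamma bhat bf bh sf Ls k /\
  (Lf f h (bf (S k)) <= (1 - gamma) * Lf f h (bhat k) + gamma * Mv f h bf bh sh k ->
     2 * vk f h bhat bf bh sh k <= Pk f h d gamma bhat bf bh sf Ls k - Pk f h d gamma bhat bf bh sf Ls (S k)).
Proof. move=> HA HL. have Hg := proj1 (proj2 (proj2 (proj2 HA))).
 have Hv := v_ge k HA. have He := ev_ge0 k HA. have HG := G_ge0 k HA.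
 have HL1 := HL (bhat k). have HL2 := HL (bhat (S k)).
 have Hd := proj1 (proj2 (proj2 HA)).
 have Hhl := hl_le k (bh (S (S k))) HA.
 have Z2 := normD2_ge0 (vsub (bh (S (S k))) (bf (S k))) Hd.
 case: (step_cases k HA) => [[E T]|[E T]].
 - have H9 := S9 (k:=k) HA E.
   have Hdl : gamma * vk f h bhat bf bh sh k <= Lf f h (bhat k) - Lf f h (bhat (S k)).
   { unfold vk. rewrite E. lra. }
   have Hq : 4 * vk f h bhat bf bh sh k <= 4 / gamma * (Lf f h (bhat k) - Lf f h (bhat (S k))).
   { apply (Rmult_le_reg_l gamma). lra. field_simplify; try lra; try nra. }
   have Hmain : Pk f h d gamma bhat bf bh sf Ls (S k) <= Pk f h d gamma bhat bf bh sf Ls k - 2 * vk f h bhat bf bh sh k.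
   { move: H9 Hq Hdl. unfold Pk, Gk, vk. move=> H9 Hq Hdl.
     have : Lf f h (bhat (S k)) - av f h d bhat bf bh sf (S k) <= Lf f h (bhat (S k)) - Lf f h (bhat k) + 2 * (Lf f h (bhat k) - Mv f h bf bh sh k).
     { move: Hv. unfold vk. lra. }
     have -> : 4 / gamma * (Lf f h (bhat (S k)) - Ls) = 4 / gamma * (Lf f h (bhat k) - Ls) - 4 / gamma * (Lf f h (bhat k) - Lf f h (bhat (S k))) by field; lra.
     have Hm := L_mono k HA.
     move: HG Hq. unfold Gk. move: Hv. unfold vk.
     set X := 4 / gamma * (Lf f h (bhat k) - Lf f h (bhat (S k))). set Y := 4 / gamma * (Lf f h (bhat k) - Ls).
     clearbody X Y. lra. }
   have Hv0 : 0 <= vk f h bhat bf bh sh k by lra.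
   split; first lra. move=> _; lra.
 - have H := P_null Ls HA E. split; last first.
   + move=> T2. by exfalso.
   + move: H. have := hl_le k (bh (S (S k))) HA. lra.
Qed.

Definition Wk p (f h : vec p -> R) d gamma (bhat : nat -> vec p) y k :=
  normD2 d (vsub (bhat k) y) + 2 / gamma * (Lf f h (bhat k) - Lf f h y).

Lemma fejer p f h d gamma (bhat bf bh sf sh : nat -> vec p) y k :
  AL f h d gamma bhat bf bh sf sh -> (forall z, Lf f h y <= Lf f h z) ->
  Wk f h d gamma bhat y (S k) <= Wk f h d gamma bhat y k.
Proof. move=> HA HL. have Hg := proj1 (proj2 (proj2 (proj2 HA))).
 unfold Wk. case: (step_cases k HA) => [[E T]|[E T]]; last (rewrite E; lra).
 have H7 := S7 k y HA. have Hhl := hl_le k y HA. have He := ev_ge0 k HA.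
 have I : normD2 d (vsub (bf (S k)) y) = normD2 d (vsub (bhat k) y) - ev d bhat bf k
    - 2 * dot (Dmul d (vsub (bf (S k)) (bhat k))) (vsub y (bf (S k))).
 { unfold ev. sumeq. }
 have Hx : 2 / gamma * (Lf f h (bhat (S k)) - Lf f h y) <= 2 / gamma * (Lf f h (bhat k) - Lf f h y)
     + 2 * (Mv f h bf bh sh k - Lf f h (bhat k)).
 { apply (Rmult_le_reg_l gamma). lra. field_simplify; try lra. rewrite E. nra. }
 have := HL (bhat k). rewrite E. rewrite E in Hx. unfold Lf in *. lra.
Qed.

Definition upd p (x : vec p) (j : 'I_p) (a : R) : vec p := fun i => if i == j then a else x i.

Lemma convex_comb p (g : vec p -> R) x y t z : convex_fun g -> 0 <= t <= 1 ->
  (forall i, z i = t * x i + (1 - t) * y i) -> g z <= t * g x + (1 - t) * g y.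
Proof. move=> Hc Ht Hz. have -> : z = vadd (vscale t x) (vscale (1 - t) y).
 { apply functional_extensionality => i. by rewrite Hz. }
 exact: Hc. Qed.

Lemma line_bound p (g : vec p -> R) x0 j T s : convex_fun g -> 0 < T -> Rabs s <= T ->
  g (upd x0 j (x0 j + s)) <= Rmax (Rmax (g (upd x0 j (x0 j + T))) (g (upd x0 j (x0 j - T)))) (g x0).
Proof. move=> Hc HT Hs.
 have M1 := Rmax_l (g (upd x0 j (x0 j + T))) (g (upd x0 j (x0 j - T))).
 have M2 := Rmax_r (g (upd x0 j (x0 j + T))) (g (upd x0 j (x0 j - T))).
 set A := Rmax (g (upd x0 j (x0 j + T))) (g (upd x0 j (x0 j - T))) in M1 M2 *.
 have M3 := Rmax_l A (g x0). have M4 := Rmax_r A (g x0).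
 set B := Rmax A (g x0) in M3 M4 *.
 case: (Rle_or_lt 0 s) => hs.
 - rewrite Rabs_right in Hs; last lra.
   have H := @convex_comb p g (upd x0 j (x0 j + T)) x0 (s / T) (upd x0 j (x0 j + s)) Hc.
   have Ht : 0 <= s / T <= 1.
   { split. unfold Rdiv; apply Rmult_le_pos; [lra| left; apply Rinv_0_lt_compat; lra]. apply (Rmult_le_reg_r T) => //. field_simplify; lra. }
   have := H Ht. move=> H2.
   have : g (upd x0 j (x0 j + s)) <= s / T * g (upd x0 j (x0 j + T)) + (1 - s / T) * g x0.
   { apply H2 => i. rewrite /upd. case: eqP => [->|_]; [field; lra|ring]. }
   nra.
 - rewrite Rabs_left in Hs; last lra.
   have H := @convex_comb p g (upd x0 j (x0 j - T)) x0 (- s / T) (upd x0 j (x0 j + s)) Hc.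
   have Ht : 0 <= - s / T <= 1.
   { split. unfold Rdiv; apply Rmult_le_pos; [lra| left; apply Rinv_0_lt_compat; lra]. apply (Rmult_le_reg_r T) => //. field_simplify; lra. }
   have := H Ht. move=> H2.
   have : g (upd x0 j (x0 j + s)) <= - s / T * g (upd x0 j (x0 j - T)) + (1 - - s / T) * g x0.
   { apply H2 => i. rewrite /upd. case: eqP => [->|_]; [field; lra|ring]. }
   nra.
Qed.

Lemma ubox_aux p (g : vec p -> R) x0 : convex_fun g -> forall m R, 0 < R -> exists M, forall y,
  (forall i : 'I_p, (i < m)%N -> Rabs (y i - x0 i) <= R) -> (forall i : 'I_p, (m <= i)%N -> y i = x0 i) -> g y <= M.
Proof. move=> Hc. elim=> [|m IH] R HR.
 - exists (g x0) => y _ H2. have -> : y = x0 by apply functional_extensionality => i; apply H2.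
   lra.
 - case: (ltnP m p) => Hmp.
   + set j := Ordinal Hmp.
     have [M1 HM1] := IH (2 * R) ltac:(lra).
     set M2 := Rmax (Rmax (g (upd x0 j (x0 j + 2 * R))) (g (upd x0 j (x0 j - 2 * R)))) (g x0).
     exists (/2 * M2 + /2 * M1) => y H1 H2.
     set z : vec p := fun i => if (i < m)%N then x0 i + 2 * (y i - x0 i) else x0 i.
     set y2 := upd x0 j (x0 j + 2 * (y j - x0 j)).
     have Hy2 : g y2 <= M2.
     { apply line_bound => //. lra. have := H1 j (ltnSn m). rewrite Rabs_mult (Rabs_right 2); lra. }
     have Hz : g z <= M1.
     { apply HM1 => i Hi; rewrite /z.
       - rewrite Hi. have := H1 i (ltnW Hi). replace (x0 i + 2 * (y i - x0 i) - x0 i) with (2 * (y i - x0 i)) by ring.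
         rewrite Rabs_mult (Rabs_right 2); lra.
       - have -> : (i < m)%N = false by apply/negbTE; rewrite -leqNgt. done. }
     have : g y <= /2 * g y2 + (1 - /2) * g z.
     { apply convex_comb => //. lra. move=> i. rewrite /y2 /z /upd.
       case: eqP => [->|Hij].
       + have -> : (j < m)%N = false by rewrite /= ltnn. field.
       + case: ltnP => Him. field.
         have Hi : (m.+1 <= i)%N.
         { rewrite ltn_neqAle Him andbT. apply/eqP => E. apply Hij. apply val_inj. by rewrite /= E. }
         rewrite (H2 i Hi). field. }
     lra.
   + have [M HM] := IH R HR. exists M => y H1 H2. apply HM.
     * move=> i Hi. apply H1. by apply ltnW.
     * move=> i Hi. exfalso. have := leq_ltn_trans (leq_trans Hmp Hi) (ltn_ord i). by rewrite ltnn.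
Qed.

Lemma ubox p (g : vec p -> R) x0 R : convex_fun g -> 0 < R -> exists M, forall y,
  (forall i, Rabs (y i - x0 i) <= R) -> g y <= M.
Proof. move=> Hc HR. have [M HM] := ubox_aux x0 Hc p HR. exists M => y H. apply HM.
 - move=> i _; exact: H.
 - move=> i Hi. exfalso. by rewrite leqNgt ltn_ord in Hi. Qed.

Lemma lip p (g : vec p -> R) x y t r M : convex_fun g -> 0 < t <= 1 -> 0 < r ->
  (forall z, (forall i, Rabs (z i - x i) <= r) -> g z <= M) ->
  (forall i, Rabs (y i - x i) <= t * r) -> g y <= g x + t * (M - g x).
Proof. move=> Hc Ht Hr HM Hy.
 set z : vec p := fun i => x i + (y i - x i) / t.
 have Hz : g z <= M.
 { apply HM => i. rewrite /z. replace (x i + (y i - x i) / t - x i) with ((y i - x i) * / t) by (field; lra).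
   rewrite Rabs_mult (Rabs_right (/ t)); last (left; apply Rinv_0_lt_compat; lra).
   apply (Rmult_le_reg_r t). lra. rewrite Rmult_assoc Rinv_l; last lra. have := Hy i. lra. }
 have : g y <= t * g z + (1 - t) * g x.
 { apply convex_comb => //. lra. move=> i. rewrite /z. field. lra. }
 nra. Qed.

Lemma modulus p (g : vec p -> R) x0 R : convex_fun g -> 0 < R -> exists K, 0 <= K /\
  forall x y t, 0 < t <= 1 -> (forall i, Rabs (x i - x0 i) <= R) -> (forall i, Rabs (y i - x i) <= t) ->
  g y <= g x + t * K.
Proof. move=> Hc HR. have [M HM] := ubox x0 Hc (ltac:(lra) : 0 < R + 1).
 have Hx0 : g x0 <= M. { apply HM => i. rewrite Rminus_diag Rabs_R0. lra. }
 exists (2 * (M - g x0)). split; first lra.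
 move=> x y t Ht Hx Hy.
 have H1 : g y <= g x + t * (M - g x).
 { apply (lip (r := 1)) => //. lra.
   - move=> z Hz. apply HM => i. have := Hz i. have := Hx i.
     move: (z i) (x i) (x0 i) => a b c. move=> h1 h2.
     have := Rabs_triang (a - b) (b - c). replace (a - b + (b - c)) with (a - c) by ring. lra.
   - move=> i. rewrite Rmult_1_r. exact: Hy. }
 have H2 : g x0 <= /2 * g x + (1 - /2) * g (fun i => 2 * x0 i - x i).
 { apply convex_comb => //. lra. move=> i. field. }
 have H3 : g (fun i => 2 * x0 i - x i) <= M.
 { apply HM => i. replace (2 * x0 i - x i - x0 i) with (- (x i - x0 i)) by ring. rewrite Rabs_Ropp. have := Hx i. lra. }
 nra. Qed.

Lemma usc p (g : vec p -> R) x0 eps : convex_fun g -> 0 < eps -> exists del, 0 < del /\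
  forall y, (forall i, Rabs (y i - x0 i) <= del) -> g y <= g x0 + eps.
Proof. move=> Hc He. have [K [HK HM]] := modulus x0 Hc (ltac:(lra) : 0 < 1).
 set del := Rmin 1 (eps / (K + 1)).
 have Hd1 : del <= 1 by apply Rmin_l. have Hd2 : del <= eps / (K + 1) by apply Rmin_r.
 have Hd0 : 0 < del. { apply Rmin_pos. lra. apply Rdiv_lt_0_compat; lra. }
 exists del. split => // y Hy.
 have Hx0 : forall i, Rabs (x0 i - x0 i) <= 1 by move=> i; rewrite Rminus_diag Rabs_R0; lra.
 have h2 := HM x0 y del (conj Hd0 Hd1) Hx0 Hy.
 have: del * K <= eps.
 { have : del * (K + 1) <= eps.
   { apply (Rmult_le_reg_r (/ (K + 1))). apply Rinv_0_lt_compat; lra.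
     rewrite Rmult_assoc Rinv_r; last lra. rewrite Rmult_1_r. exact Hd2. }
   nra. }
 lra.
Qed.

Lemma lsc p (g : vec p -> R) x0 eps : convex_fun g -> 0 < eps -> exists del, 0 < del /\ (forall y, (forall i, Rabs (y i - x0 i) <= del) -> (g x0 - eps <= g y)).
Proof. move=> Hc He. have [del [Hd H]] := usc x0 Hc He. exists del. split => // y Hy.
 have H2 : g x0 <= /2 * g y + (1 - /2) * g (fun i => 2 * x0 i - y i).
 { apply convex_comb => //. lra. move=> i. field. }
 have H3 : g (fun i => 2 * x0 i - y i) <= g x0 + eps.
 { apply H => i. replace (2 * x0 i - y i - x0 i) with (- (y i - x0 i)) by ring. rewrite Rabs_Ropp. exact: Hy. }
 lra. Qed.

Lemma incr_lt (phi : nat -> nat) : (forall n, (phi n < phi (S n))%nat) -> forall a b, (a < b)%nat -> (phi a < phi b)%nat.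
Proof. move=> H a. elim=> [|b IH] Hab; first lia.
 case: (ltnP a b) => h. have := IH h. have := H b. lia.
 have -> : a = b by lia. exact: H. Qed.

Lemma incr_ge (phi : nat -> nat) : (forall n, (phi n < phi (S n))%nat) -> forall n, (n <= phi n)%nat.
Proof. move=> H. elim=> [|n IH]; first lia. have := H n. lia. Qed.

Lemma inv_small eps : 0 < eps -> exists N : nat, forall n, (N <= n)%nat -> / (INR n + 1) < eps.
Proof. move=> He. have [N [H1 H2]] := archimed_cor1 eps He. exists N => n Hn.
 have : INR N <= INR n by apply le_INR; lia.
 have : 0 < INR N by apply lt_0_INR; lia.
 move=> h1 h2. apply: Rle_lt_trans H1. apply Rinv_le_contravar; lra. Qed.

Lemma Rabs_bnd x B : Rabs x <= B -> - B <= x <= B.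
Proof. unfold Rabs. case: Rcase_abs => h H; lra. Qed.

Lemma BW1 (u : nat -> R) B : (forall n, Rabs (u n) <= B) ->
  exists phi : nat -> nat, (forall n, (phi n < phi (S n))%nat) /\
  exists l, forall eps, 0 < eps -> exists N, forall n, (N <= n)%nat -> Rabs (u (phi n) - l) < eps.
Proof. move=> HB.
 have [l Hl] := Bolzano_Weierstrass u (fun c => - B <= c <= B) (compact_P3 (- B) B)
   (fun n => Rabs_bnd (HB n)).
 have Hc : forall n N : nat, exists k : nat, (N <= k)%nat /\ Rabs (u k - l) < / (INR n + 1).
 { move=> n N. have Hpos : 0 < / (INR n + 1) by apply Rinv_0_lt_compat; have := pos_INR n; lra.
   have Hnb : neighbourhood (fun y => Rabs (y - l) < / (INR n + 1)) l.
   { exists (mkposreal _ Hpos). move=> y hy. exact hy. }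
   have [k [Hk Vk]] := Hl (fun y => Rabs (y - l) < / (INR n + 1)) N Hnb.
   exists k; split => //. by apply/leP. }
 pose ch n N := proj1_sig (constructive_indefinite_description _ (Hc n N)).
 have Hch : forall n N, (N <= ch n N)%nat /\ Rabs (u (ch n N) - l) < / (INR n + 1).
 { move=> n N. rewrite /ch. case: constructive_indefinite_description => //. }
 pose phi := fix phi n := match n with 0%nat => ch 0%nat 0%nat | S m => ch (S m) (S (phi m)) end.
 exists phi. split.
 - move=> n. have := proj1 (Hch (S n) (S (phi n))). simpl. lia.
 - exists l => eps He. have [N HN] := inv_small He. exists N => n Hn.
   have : Rabs (u (phi n) - l) < / (INR n + 1) by case: n Hn => [|n] Hn; apply Hch.
   have := HN n Hn. lra.
Qed.

Lemma BWp_aux p (c : nat -> vec p) B : (forall k i, Rabs (c k i) <= B) -> forall m,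
  exists phi : nat -> nat, (forall n, (phi n < phi (S n))%nat) /\
  exists l : vec p, forall eps, 0 < eps -> exists N, forall n, (N <= n)%nat ->
    forall i : 'I_p, (i < m)%nat -> Rabs (c (phi n) i - l i) < eps.
Proof. move=> HB. elim=> [|m [phi [Hphi [l Hl]]]].
 - exists id. split; first (move=> n; lia). exists (fun _ => 0) => eps He. exists 0%nat => n _ i Hi. lia.
 - case: (ltnP m p) => Hmp.
   + set j := Ordinal Hmp.
     have [psi [Hpsi [lj Hlj]]] := @BW1 (fun n => c (phi n) j) B (fun n => HB _ _).
     exists (fun n => phi (psi n)). split.
     * move=> n. apply incr_lt => //.
     * exists (upd l j lj) => eps He. have [N1 HN1] := Hl eps He. have [N2 HN2] := Hlj eps He.
       exists (maxn N1 N2) => n Hn i Hi. rewrite /upd. case: eqP => [->|Hij].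
       -- apply HN2. lia.
       -- have Him : (i < m)%nat.
          { have : nat_of_ord i <> m by move=> E; apply Hij; apply val_inj; rewrite /= E. lia. }
          apply HN1 => //. have := incr_ge Hpsi n. lia.
   + exists phi. split => //. exists l => eps He. have [N HN] := Hl eps He. exists N => n Hn i Hi.
     apply HN => //. have := ltn_ord i. lia.
Qed.

Lemma BWp p (c : nat -> vec p) B : (forall k i, Rabs (c k i) <= B) ->
  exists phi : nat -> nat, (forall n, (phi n < phi (S n))%nat) /\
  exists l : vec p, forall eps, 0 < eps -> exists N, forall n, (N <= n)%nat ->
    forall i : 'I_p, Rabs (c (phi n) i - l i) < eps.
Proof. move=> HB. have [phi [H1 [l H2]]] := BWp_aux HB p. exists phi; split => //. exists l => eps He.
 have [N HN] := H2 eps He. exists N => n Hn i. apply HN => //. Qed.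

Lemma le_eps a b C : 0 <= C -> (forall eps, 0 < eps -> a <= b + C * eps) -> a <= b.
Proof. move=> HC H. case: (Rle_or_lt a b) => // h.
 have := H ((a - b) / (2 * (C + 1))). move=> /(_ _). 
 have Hp : 0 < (a - b) / (2 * (C + 1)) by apply Rdiv_lt_0_compat; lra.
 move=> /(_ Hp) H2. exfalso.
 have : C * ((a - b) / (2 * (C + 1))) <= (a - b) / 2.
 { apply (Rmult_le_reg_r (2 * (C + 1))). lra. field_simplify; try lra; try nra. }
 lra. Qed.

Definition Dinv p (d : vec p) := 1 + \big[Rplus/0]_(i < p) / d i.
Definition Dsum p (d : vec p) := \big[Rplus/0]_(i < p) d i.

Lemma Dinv_ge p (d : vec p) i : (forall i, 0 < d i) -> / d i <= Dinv d /\ 1 <= Dinv d.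
Proof. move=> Hd. unfold Dinv.
 have H : forall j, 0 <= / d j by move=> j; left; apply Rinv_0_lt_compat.
 have := @sum_single p (fun j => / d j) i H. have := @sum_ge0 p (fun j => / d j) H. lra. Qed.

Lemma Dinv_ge1 p (d : vec p) : (forall i, 0 < d i) -> 1 <= Dinv d.
Proof. move=> Hd. unfold Dinv. have := @sum_ge0 p (fun j => / d j) (fun j => Rlt_le _ _ (Rinv_0_lt_compat _ (Hd j))). lra. Qed.

Lemma Dsum_ge0 p (d : vec p) : (forall i, 0 < d i) -> 0 <= Dsum d.
Proof. move=> Hd. apply sum_ge0 => i. left; apply Hd. Qed.

Lemma abs_le_sq x : Rabs x <= 1 + x * x.
Proof. unfold Rabs. case: Rcase_abs => h; nra. Qed.

Lemma coord_bound p (d u : vec p) E i : (forall i, 0 < d i) -> 0 <= E -> normD2 d u <= E ->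
  Rabs (u i) <= 1 + E * Dinv d.
Proof. move=> Hd HE H. have H1 := normD2_coord u i Hd. have [H2 H3] := Dinv_ge i Hd.
 have Hdi := Hd i.
 have : u i * u i <= E * / d i.
 { apply (Rmult_le_reg_l (d i)) => //. replace (d i * (E * / d i)) with E by (field; lra). lra. }
 have : E * / d i <= E * Dinv d by apply Rmult_le_compat_l.
 have := abs_le_sq (u i). lra. Qed.

Lemma sq_small w t : 0 < t -> w * w <= t * t -> Rabs w <= t.
Proof. move=> Ht H. unfold Rabs. case: Rcase_abs => h; nra. Qed.

Lemma normD2_small p (d u : vec p) rho : (forall i, 0 < d i) -> (forall i, Rabs (u i) <= rho) ->
  normD2 d u <= rho * rho * Dsum d.
Proof. move=> Hd H. unfold normD2, dot, Dmul, Dsum. rewrite -sumZ. apply sum_le => i.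
 have := H i. have := Hd i. move: (u i) (d i) => a b h1 h2.
 have : a * a <= rho * rho. { have := Rabs_pos a. have : a * a = Rabs a * Rabs a.
   { unfold Rabs. case: Rcase_abs => _; ring. } nra. }
 nra. Qed.

Lemma dot_lower p (a b : vec p) eps : (forall i, Rabs (a i) <= eps) ->
  - (eps * \big[Rplus/0]_(i < p) Rabs (b i)) <= dot a b.
Proof. move=> H. unfold dot. rewrite -sumZ -sumN. apply sum_le => i. have := H i.
 move: (a i) (b i) => x y. unfold Rabs. case: Rcase_abs => h1; case: Rcase_abs => h2; nra. Qed.

Lemma young p (d u w : vec p) tau : (forall i, 0 < d i) ->
  2 * tau * dot (Dmul d u) w <= tau * tau * normD2 d u + normD2 d w.
Proof. move=> Hd. have := normD2_ge0 (vsub (vscale tau u) w) Hd.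
 have I : normD2 d (vsub (vscale tau u) w) = tau * tau * normD2 d u + normD2 d w - 2 * tau * dot (Dmul d u) w by sumeq.
 lra. Qed.

Lemma para p (d x y z : vec p) : (forall i, 0 < d i) ->
  normD2 d (vsub x z) <= 2 * normD2 d (vsub x y) + 2 * normD2 d (vsub z y).
Proof. move=> Hd. have := normD2_ge0 (vsub (vadd x z) (vscale 2 y)) Hd.
 have I : normD2 d (vsub (vadd x z) (vscale 2 y)) = 2 * normD2 d (vsub x y) + 2 * normD2 d (vsub z y) - normD2 d (vsub x z) by sumeq.
 lra. Qed.

Lemma P_props p f h d gamma (bhat bf bh sf sh : nat -> vec p) Ls :
  AL f h d gamma bhat bf bh sf sh -> (forall y, Ls <= Lf f h y) ->
  (forall k j, (k <= j)%N -> Pk f h d gamma bhat bf bh sf Ls j <= Pk f h d gamma bhat bf bh sf Ls k) /\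
  (forall k, Gk f h d bhat bf bh sf k <= Pk f h d gamma bhat bf bh sf Ls k) /\
  (forall k, 0 <= Pk f h d gamma bhat bf bh sf Ls k).
Proof. move=> HA HL. have Hg := proj1 (proj2 (proj2 (proj2 HA))).
 have H4 : forall k, 0 <= 4 / gamma * (Lf f h (bhat k) - Ls).
 { move=> k. apply Rmult_le_pos. unfold Rdiv. apply Rmult_le_pos. lra. left; apply Rinv_0_lt_compat; lra.
   have := HL (bhat k). lra. }
 split; [|split].
 - move=> k j Hkj. elim: j Hkj => [|j IH] Hkj.
   + have -> : k = 0%N by lia. lra.
   + case: (ltnP k (S j)) => hk.
     * have := IH ltac:(lia). have := proj1 (P_step j HA HL). lra.
     * have -> : k = S j by lia. lra.
 - move=> k. unfold Pk. have := H4 k. lra.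
 - move=> k. unfold Pk. have := H4 k. have := G_ge0 k HA. lra.
Qed.

Lemma bounds_e p f h d gamma (bhat bf bh sf sh : nat -> vec p) Ls k :
  AL f h d gamma bhat bf bh sf sh -> (forall y, Ls <= Lf f h y) ->
  ev d bhat bf k <= 2 * Pk f h d gamma bhat bf bh sf Ls 0 /\
  normD2 d (vsub (bf (S k)) (bh (S k))) <= 2 * Pk f h d gamma bhat bf bh sf Ls 0 /\
  vk f h bhat bf bh sh k <= 2 * Pk f h d gamma bhat bf bh sf Ls 0.
Proof. move=> HA HL. have [H1 [H2 H3]] := P_props HA HL.
 have := H1 0%N k ltac:(lia). have := H2 k. have := S5b k HA. have := S6b k HA.
 have := ev_ge0 k HA. have Hd := proj1 (proj2 (proj2 HA)).
 have := normD2_ge0 (vsub (bf (S k)) (bh (S k))) Hd.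
 unfold Gk, vk. lra. Qed.

Lemma W_mono p f h d gamma (bhat bf bh sf sh : nat -> vec p) y :
  AL f h d gamma bhat bf bh sf sh -> (forall z, Lf f h y <= Lf f h z) ->
  forall k j, (k <= j)%N -> Wk f h d gamma bhat y j <= Wk f h d gamma bhat y k.
Proof. move=> HA HL k j Hkj. elim: j Hkj => [|j IH] Hkj.
 + have -> : k = 0%N by lia. lra.
 + case: (ltnP k (S j)) => hk.
   * have := IH ltac:(lia). have := fejer j HA HL. lra.
   * have -> : k = S j by lia. lra.
Qed.

Lemma W_ge p f h d gamma (bhat bf bh sf sh : nat -> vec p) y k :
  AL f h d gamma bhat bf bh sf sh -> (forall z, Lf f h y <= Lf f h z) ->
  normD2 d (vsub (bhat k) y) <= Wk f h d gamma bhat y k.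
Proof. move=> HA HL. have Hg := proj1 (proj2 (proj2 (proj2 HA))). unfold Wk.
 have : 0 <= 2 / gamma * (Lf f h (bhat k) - Lf f h y).
 { apply Rmult_le_pos. unfold Rdiv. apply Rmult_le_pos. lra. left; apply Rinv_0_lt_compat; lra.
   have := HL (bhat k). lra. }
 lra. Qed.

Lemma abs_tri a b c : Rabs (a - c) <= Rabs (a - b) + Rabs (b - c).
Proof. have := Rabs_triang (a - b) (b - c). by replace (a - b + (b - c)) with (a - c) by ring. Qed.

Lemma iter_box p f h d gamma (bhat bf bh sf sh : nat -> vec p) xs :
  AL f h d gamma bhat bf bh sf sh -> (forall z, Lf f h xs <= Lf f h z) ->
  let E := Wk f h d gamma bhat xs 0 + 2 * Pk f h d gamma bhat bf bh sf (Lf f h xs) 0 in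
  let Rb := 1 + E * Dinv d in
  0 < Rb /\ forall k i, Rabs (bhat k i - xs i) <= Rb /\ Rabs (bf (S k) i - xs i) <= 2 * Rb /\
     Rabs (bh (S k) i - xs i) <= 3 * Rb.
Proof. move=> HA HL E Rb. have Hd := proj1 (proj2 (proj2 HA)).
 have [H1 [H2 H3]] := P_props HA HL.
 have HW0 : 0 <= Wk f h d gamma bhat xs 0.
 { have := W_ge 0 HA HL. have := normD2_ge0 (vsub (bhat 0%N) xs) Hd. lra. }
 have HE : 0 <= E by unfold E; have := H3 0%N; lra.
 have HDi := Dinv_ge1 Hd.
 have HRb : 0 < Rb. { unfold Rb. have : 0 <= E * Dinv d by apply Rmult_le_pos; lra. lra. }
 split => // k i.
 have HWk : normD2 d (vsub (bhat k) xs) <= E.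
 { have := W_ge k HA HL. have := W_mono HA HL (leq0n k). have := H3 0%N. unfold E. lra. }
 have [He [Hz _]] := bounds_e k HA HL.
 have HeE : ev d bhat bf k <= E by unfold E; lra.
 have HzE : normD2 d (vsub (bf (S k)) (bh (S k))) <= E by unfold E; lra.
 have B1 := coord_bound i Hd HE HWk. have B2 := coord_bound i Hd HE HeE. have B3 := coord_bound i Hd HE HzE.
 rewrite /vsub in B1 B2 B3. fold Rb in B1, B2, B3.
 have T1 := abs_tri (bf (S k) i) (bhat k i) (xs i).
 have T2 := abs_tri (bh (S k) i) (bf (S k) i) (xs i).
 have T3 : Rabs (bh (S k) i - bf (S k) i) = Rabs (bf (S k) i - bh (S k) i) by apply Rabs_minus_sym.
 lra. Qed.

Lemma P_cauchy p f h d gamma (bhat bf bh sf sh : nat -> vec p) Ls :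
  AL f h d gamma bhat bf bh sf sh -> (forall y, Ls <= Lf f h y) ->
  forall eta, 0 < eta -> exists N, forall k, (N <= k)%N ->
   Pk f h d gamma bhat bf bh sf Ls k - Pk f h d gamma bhat bf bh sf Ls (S k) < eta.
Proof. move=> HA HL eta He. have [H1 [_ H3]] := P_props HA HL.
 set P := Pk f h d gamma bhat bf bh sf Ls.
 have Hdec : Un_decreasing P. { move=> n. apply H1. lia. }
 have Hlb : has_lb P. { exists 0. move=> x [i ->]. unfold opp_seq. have := H3 i. fold P. lra. }
 have [l Hl] := decreasing_cv P Hdec Hlb.
 have [N HN] := Hl (eta / 2) ltac:(lra).
 exists N => k Hk. have A := HN k ltac:(lia). have B := HN (S k) ltac:(lia).
 unfold R_dist in A, B. move: A B. unfold Rabs. do 2 case: Rcase_abs => ?; lra.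
Qed.

Lemma v_to_0 p f h d gamma (bhat bf bh sf sh : nat -> vec p) xs :
  AL f h d gamma bhat bf bh sf sh -> (forall z, Lf f h xs <= Lf f h z) ->
  forall eps, 0 < eps -> exists N, forall k, (N <= k)%N -> vk f h bhat bf bh sh k < eps.
Proof. move=> HA HL eps He.
 have [Hf [Hh [Hd [Hg [H0 Hs]]]]] := HA.
 have [HRb Hbox] := iter_box HA HL.
 set Rb := 1 + _ * Dinv d in HRb Hbox.
 have [K [HK HM]] := modulus xs Hh (ltac:(lra) : 0 < 3 * Rb).
 set t := Rmin 1 ((1 - gamma) * eps / (4 * (K + 1))).
 have Ht1 : t <= 1 by apply Rmin_l.
 have Ht2 : t <= (1 - gamma) * eps / (4 * (K + 1)) by apply Rmin_r.
 have Ht0 : 0 < t. { apply Rmin_pos. lra. apply Rdiv_lt_0_compat. nra. lra. }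
 have HtK : t * K <= (1 - gamma) * eps / 4.
 { have : t * (4 * (K + 1)) <= (1 - gamma) * eps.
   { apply (Rmult_le_reg_r (/ (4 * (K + 1)))). apply Rinv_0_lt_compat; lra.
     rewrite Rmult_assoc Rinv_r; last lra. rewrite Rmult_1_r. exact Ht2. }
   nra. }
 have HDi := Dinv_ge1 Hd.
 set eta := Rmin (t * t / (2 * Dinv d)) ((1 - gamma) * eps / 2).
 have Hq1 : eta <= t * t / (2 * Dinv d) by apply Rmin_l.
 have Hq2 : eta <= (1 - gamma) * eps / 2 by apply Rmin_r.
 have Hq0 : 0 < eta. { apply Rmin_pos; apply Rdiv_lt_0_compat; nra. }
 have [N HN] := P_cauchy HA HL Hq0.
 exists N => k Hk. have HPk := HN k Hk.
 have Hv0 : 0 <= vk f h bhat bf bh sh k by have := v_ge k HA; have := ev_ge0 k HA; lra.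
 case: (step_cases k HA) => [[E T]|[E T]].
 - have := proj2 (P_step k HA HL) T. move=> h2.
   have : (1 - gamma) * eps / 2 < 2 * eps by nra. lra.
 - have HPn := P_null (Lf f h xs) HA E.
   have Hhl := hl_le k (bh (S (S k))) HA.
   have Hz0 := normD2_ge0 (vsub (bh (S (S k))) (bf (S k))) Hd.
   have HT := S8t T.
   set w := vsub (bf (S k)) (bh (S (S k))).
   have Hw : forall i, Rabs (w i) <= t.
   { move=> i. apply sq_small => //.
     have Iz : normD2 d w = normD2 d (vsub (bh (S (S k))) (bf (S k))) by unfold w; sumeq.
     have Hc := normD2_coord w i Hd. have Hdi := Hd i.
     have [HDi1 _] := Dinv_ge i Hd.
     have Hz : normD2 d w < 2 * eta by lra.
     have : w i * w i <= normD2 d w * / d i.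
     { apply (Rmult_le_reg_l (d i)) => //. replace (d i * (normD2 d w * / d i)) with (normD2 d w) by (field; lra). lra. }
     have : normD2 d w * / d i <= 2 * eta * Dinv d.
     { apply Rmult_le_compat. apply normD2_ge0 => //. left; apply Rinv_0_lt_compat; lra. lra. lra. }
     have : 2 * eta * Dinv d <= t * t.
     { have : eta * (2 * Dinv d) <= t * t.
       { apply (Rmult_le_reg_r (/ (2 * Dinv d))). apply Rinv_0_lt_compat; lra.
         rewrite Rmult_assoc Rinv_r; last lra. rewrite Rmult_1_r. exact Hq1. }
       lra. }
     lra. }
   have M1 : h (bf (S k)) <= h (bh (S (S k))) + t * K.
   { apply HM; [lra | move=> i; exact: (proj2 (proj2 (Hbox (S k) i))) | move=> i; exact: Hw]. }
   have M2 : h (vsub (bh (S k)) w) <= h (bh (S k)) + t * K.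
   { apply HM; [lra | move=> i; exact: (proj2 (proj2 (Hbox k i))) | ]. move=> i. rewrite /vsub.
     replace (bh (S k) i - w i - bh (S k) i) with (- w i) by ring. rewrite Rabs_Ropp. exact: Hw. }
   have Sg := sub_h k HA (vsub (bh (S k)) w).
   have I1 : hl h bh sh k (bf (S k)) - hl h bh sh k (bh (S (S k))) = dot (sh (S k)) w.
   { unfold hl, w. have : dot (sh (S k)) (vsub (bf (S k)) (bh (S k))) - dot (sh (S k)) (vsub (bh (S (S k))) (bh (S k)))
       = dot (sh (S k)) (vsub (bf (S k)) (bh (S (S k)))) by sumeq. lra. }
   have I2 : dot (sh (S k)) (vsub (vsub (bh (S k)) w) (bh (S k))) = - dot (sh (S k)) w by sumeq.
   have Hfin : (1 - gamma) * vk f h bhat bf bh sh k < (1 - gamma) * eps.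
   { unfold vk. move: HT HPn. lra. }
   apply (Rmult_lt_reg_l (1 - gamma)). lra. exact Hfin.
Qed.

Lemma div_le a b c : 0 < b -> a <= c * b -> a / b <= c.
Proof. move=> Hb H. apply (Rmult_le_reg_r b) => //. unfold Rdiv. rewrite Rmult_assoc Rinv_l; lra. Qed.

Lemma L_to_min p f h d gamma (bhat bf bh sf sh : nat -> vec p) xs :
  AL f h d gamma bhat bf bh sf sh -> (forall z, Lf f h xs <= Lf f h z) ->
  forall eps, 0 < eps -> exists N, forall k, (N <= k)%N -> Lf f h (bhat k) <= Lf f h xs + eps.
Proof. move=> HA HL eps He. have Hd := proj1 (proj2 (proj2 HA)).
 have [H1 [H2 H3]] := P_props HA HL.
 set Q := 2 * Wk f h d gamma bhat xs 0 + 4 * Pk f h d gamma bhat bf bh sf (Lf f h xs) 0.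
 have HQ : 0 <= Q.
 { unfold Q. have := W_ge 0 HA HL. have := normD2_ge0 (vsub (bhat 0%N) xs) Hd. have := H3 0%N. lra. }
 set tau := 1 + Q / eps.
 have Htau : 1 <= tau. { unfold tau. have : 0 <= Q / eps by apply Rmult_le_pos; [lra| left; apply Rinv_0_lt_compat; lra]. lra. }
 have HQt : Q / (2 * tau) <= eps / 2.
 { apply div_le. lra. unfold tau.
   have -> : eps / 2 * (2 * (1 + Q / eps)) = eps + Q by field; lra. lra. }
 have Hpos : 0 < eps / (2 + tau) by apply Rdiv_lt_0_compat; lra.
 have [N HN] := v_to_0 HA HL Hpos.
 exists N => k Hk. have Hv := HN k Hk.
 have H7 := S7 k xs HA. have Hhl := hl_le k xs HA.
 set u := vsub (bf (S k)) (bhat k). set w := vsub xs (bf (S k)).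
 have Y := young u w tau Hd.
 have Hpara := para xs (bhat k) (bf (S k)) Hd.
 have I1 : normD2 d (vsub xs (bhat k)) = normD2 d (vsub (bhat k) xs) by sumeq.
 have Hwk := W_ge k HA HL. have Hmono := W_mono HA HL (leq0n k).
 have HP := H1 0%N k (leq0n k).
 have [He' _] := bounds_e k HA HL.
 have Hev := v_ge k HA. have He0 := ev_ge0 k HA.
 have Hw : normD2 d w <= Q. { unfold w, Q. unfold ev in He'. lra. }
 have Hdot : dot (Dmul d u) w <= tau * ev d bhat bf k / 2 + Q / (2 * tau).
 { have : dot (Dmul d u) w * (2 * tau) <= (tau * ev d bhat bf k / 2 + Q / (2 * tau)) * (2 * tau).
   { replace ((tau * ev d bhat bf k / 2 + Q / (2 * tau)) * (2 * tau)) with (tau * tau * ev d bhat bf k + Q) by (field; lra).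
     unfold ev. fold u. lra. }
   move=> hh. apply (Rmult_le_reg_r (2 * tau)) => //. lra. }
 have Hvt : vk f h bhat bf bh sh k * (1 + tau / 2) <= eps / 2.
 { have : vk f h bhat bf bh sh k * (2 + tau) <= eps.
   { have := Rmult_lt_compat_r (2 + tau) _ _ ltac:(lra) Hv. replace (eps / (2 + tau) * (2 + tau)) with eps by (field; lra). lra. }
   lra. }
 move: H7 Hhl. unfold vk in *. unfold Lf in *. fold u w. 
 have : tau * ev d bhat bf k / 2 <= tau * (f (bhat k) + h (bhat k) - Mv f h bf bh sh k) / 2 by nra.
 lra.
Qed.

Lemma xb_min p f h d gamma (bhat bf bh sf sh : nat -> vec p) xs (phi : nat -> nat) xb :
  AL f h d gamma bhat bf bh sf sh -> (forall z, Lf f h xs <= Lf f h z) ->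
  (forall n, (phi n < phi (S n))%N) ->
  (forall eps, 0 < eps -> exists N, forall n, (N <= n)%N -> forall i, Rabs (bhat (phi n) i - xb i) < eps) ->
  forall z, Lf f h xb <= Lf f h z.
Proof. move=> HA HL Hphi Hc z. have [Hf [Hh _]] := HA.
 suff : Lf f h xb <= Lf f h xs by have := HL z; lra.
 apply (le_eps (C := 3)); first lra. move=> eps He.
 have [d1 [Hd1 L1]] := lsc xb Hf He. have [d2 [Hd2 L2]] := lsc xb Hh He.
 have [N1 HN1] := Hc (Rmin d1 d2) (Rmin_pos _ _ Hd1 Hd2).
 have [N2 HN2] := L_to_min HA HL He.
 set n := maxn N1 N2.
 have Hn1 := HN1 n (leq_maxl _ _).
 have Hn2 := HN2 (phi n) ltac:(have := incr_ge Hphi n; have := leq_maxr N1 N2; lia).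
 have A1 := L1 (bhat (phi n)) (fun i => Rlt_le _ _ (Rlt_le_trans _ _ _ (Hn1 i) (Rmin_l _ _))).
 have A2 := L2 (bhat (phi n)) (fun i => Rlt_le _ _ (Rlt_le_trans _ _ _ (Hn1 i) (Rmin_r _ _))).
 move: Hn2. unfold Lf. lra. Qed.

Lemma W_to_0 p f h d gamma (bhat bf bh sf sh : nat -> vec p) xs (phi : nat -> nat) xb :
  AL f h d gamma bhat bf bh sf sh -> (forall z, Lf f h xs <= Lf f h z) ->
  (forall n, (phi n < phi (S n))%N) ->
  (forall eps, 0 < eps -> exists N, forall n, (N <= n)%N -> forall i, Rabs (bhat (phi n) i - xb i) < eps) ->
  (forall z, Lf f h xb <= Lf f h z) ->
  forall eps, 0 < eps -> exists N, forall k, (N <= k)%N -> Wk f h d gamma bhat xb k < eps.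
Proof. move=> HA HL Hphi Hc HLb eps He. have Hd := proj1 (proj2 (proj2 HA)).
 have Hg := proj1 (proj2 (proj2 (proj2 HA))).
 have HDs := Dsum_ge0 Hd.
 set rho := Rmin 1 (eps / (2 * (Dsum d + 1))).
 have Hr1 : rho <= 1 by apply Rmin_l. have Hr2 : rho <= eps / (2 * (Dsum d + 1)) by apply Rmin_r.
 have Hr0 : 0 < rho by apply Rmin_pos; [lra | apply Rdiv_lt_0_compat; lra].
 have Hrr : rho * rho * Dsum d <= eps / 2.
 { have : rho * (2 * (Dsum d + 1)) <= eps.
   { apply (Rmult_le_reg_r (/ (2 * (Dsum d + 1)))). apply Rinv_0_lt_compat; lra.
     rewrite Rmult_assoc Rinv_r; last lra. rewrite Rmult_1_r. exact Hr2. }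
   nra. }
 have [N1 HN1] := Hc rho Hr0.
 have Heta : 0 < gamma * eps / 8 by nra.
 have [N2 HN2] := L_to_min HA HL Heta.
 set n := maxn N1 N2.
 exists (phi n) => k Hk.
 have H1 := W_mono HA HLb Hk. apply: Rle_lt_trans H1 _.
 have Hn2 := HN2 (phi n) ltac:(have := incr_ge Hphi n; have := leq_maxr N1 N2; lia).
 have Hn1 := HN1 n (leq_maxl _ _).
 have Hs := normD2_small (u := vsub (bhat (phi n)) xb) (rho := rho) Hd (fun i => Rlt_le _ _ (Hn1 i)).
 have Hxx : Lf f h xb <= Lf f h xs := HLb xs.
 unfold Wk.
 have : 2 / gamma * (Lf f h (bhat (phi n)) - Lf f h xb) <= eps / 4.
 { have HH := HL xb. apply (Rmult_le_reg_l gamma). lra.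
   replace (gamma * (2 / gamma * (Lf f h (bhat (phi n)) - Lf f h xb))) with (2 * (Lf f h (bhat (phi n)) - Lf f h xb)) by (field; lra).
   lra. }
 lra. Qed.

Unset Implicit Arguments.

Theorem theorem1 (p : nat) (f h : vec p -> R) (d : vec p) (gamma : R)
  (bhat bf bh sf sh : nat -> vec p) :
  convex_fun f -> convex_fun h ->
  (exists x : vec p, is_minimizer (fun b => f b + h b) x) ->
  (forall i : 'I_p, 0 < d i) ->
  0 < gamma < 1 ->
  bf 0%nat = bhat 0%nat ->
  subgrad f (bf 0%nat) (sf 0%nat) ->
  (forall k : nat, alin_step f h d gamma bhat bf bh sf sh k) ->
  exists bstar : vec p,
    is_minimizer (fun b => f b + h b) bstar /\
    (forall i : 'I_p, Un_cv (fun k => bhat k i) (bstar i)) /\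
    (forall sfs shs : vec p, accum_point2 sf sh sfs shs ->
       subgrad f bstar sfs /\ subgrad h bstar shs /\
       (forall i : 'I_p, sfs i + shs i = 0)).
Proof.
 move=> Hf Hh [xs Hxs] Hd Hg _ H0 Hs.
 have HA : AL f h d gamma bhat bf bh sf sh by repeat split => //; apply Hg.
 have HL : forall z, Lf f h xs <= Lf f h z := Hxs.
 have [HRb Hbox] := iter_box HA HL.
 set Rb := 1 + _ * Dinv d in HRb Hbox.
 set Sx := \big[Rplus/0]_(i < p) Rabs (xs i).
 have HB : forall k i, Rabs (bhat k i) <= Rb + Sx.
 { move=> k i. have := proj1 (Hbox k i).
   have := @sum_single p (fun j => Rabs (xs j)) i (fun j => Rabs_pos _). fold Sx.
   have := Rabs_triang (bhat k i - xs i) (xs i). replace (bhat k i - xs i + xs i) with (bhat k i) by ring. lra. }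
 have [phi [Hphi [xb Hc]]] := BWp HB.
 have HLb := xb_min HA HL Hphi Hc.
 have HW := W_to_0 HA HL Hphi Hc HLb.
 exists xb. split; [exact: HLb | split].
 - move=> i eps He. have Hdi := Hd i.
   have [N HN] := HW (d i * (eps * eps)) (Rmult_lt_0_compat _ _ Hdi (Rmult_lt_0_compat _ _ He He)).
   exists N => n Hn. unfold R_dist.
   have A := HN n ltac:(lia). have B := W_ge n HA HLb. have C : d i * ((bhat n i - xb i) * (bhat n i - xb i)) <= normD2 d (vsub (bhat n) xb) := normD2_coord (vsub (bhat n) xb) i Hd.
   have : (bhat n i - xb i) * (bhat n i - xb i) < eps * eps.
   { apply (Rmult_lt_reg_l (d i)) => //. lra. }
   move=> hh. case: (Rle_or_lt eps (Rabs (bhat n i - xb i))) => // hc.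
   exfalso. have : Rabs (bhat n i - xb i) * Rabs (bhat n i - xb i) < eps * eps.
   { have -> : Rabs (bhat n i - xb i) * Rabs (bhat n i - xb i) = (bhat n i - xb i) * (bhat n i - xb i).
     { unfold Rabs. case: Rcase_abs => ?; ring. } exact hh. }
   nra.
 - move=> sfs shs Hacc.
   have Hsum0 : forall y, 0 <= 4 + \big[Rplus/0]_(i < p) Rabs (y i - xb i).
   { move=> y. have := @sum_ge0 p (fun i => Rabs (y i - xb i)) (fun i => Rabs_pos _). lra. }
   split; [|split].
   + move=> y. apply (le_eps (C := 4 + \big[Rplus/0]_(i < p) Rabs (vsub y xb i))). exact: Hsum0.
     move=> eps He.
     have [N1 HN1] := v_to_0 HA HL He. have [N2 HN2] := HW eps He.
     have [m [Hm Hcl]] := Hacc eps He (S (maxn N1 N2)).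
     case: m Hm Hcl => [|k] Hm Hcl; first lia.
     have Hv := HN1 k ltac:(lia). have Hw := HN2 k ltac:(lia).
     have Hwk := W_ge k HA HLb.
     have [_ [_ [_ [E2 _]]]] := step_unfold (Hs k).
     have S1 := sub_f (S k) HA y. have S2 := sub_h k HA xb.
     have HLk := HLb (bhat k).
     have I : dot (sf (S k)) (vsub y (bf (S k))) + dot (sh (S k)) (vsub xb (bh (S k))) - dot (sh (S k)) (vsub (bf (S k)) (bh (S k)))
       = dot sfs (vsub y xb) + dot (vsub (sf (S k)) sfs) (vsub y xb) - dot (Dmul d (vsub (bf (S k)) (bhat k))) (vsub xb (bf (S k))).
     { rewrite E2. sumeq. }
     have DL := @dot_lower p (vsub (sf (S k)) sfs) (vsub y xb) eps (fun i => Rlt_le _ _ (proj1 (Hcl i))).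
     have Y := young (vsub (bf (S k)) (bhat k)) (vsub xb (bf (S k))) 1 Hd.
     have Pa := para xb (bhat k) (bf (S k)) Hd.
     have I2 : normD2 d (vsub xb (bhat k)) = normD2 d (vsub (bhat k) xb) by sumeq.
     have Hev := v_ge k HA. have He0 := ev_ge0 k HA.
     move: Hv Hev. unfold vk, Mv, hl, ev, Lf in *. move=> Hv Hev. nra.
   + move=> y. apply (le_eps (C := 4 + \big[Rplus/0]_(i < p) Rabs (vsub y xb i))). exact: Hsum0.
     move=> eps He.
     have [N1 HN1] := v_to_0 HA HL He. have [N2 HN2] := HW eps He.
     have [m [Hm Hcl]] := Hacc eps He (S (maxn N1 N2)).
     case: m Hm Hcl => [|k] Hm Hcl; first lia.
     have Hv := HN1 k ltac:(lia). have Hw := HN2 k ltac:(lia).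
     have Hwk := W_ge k HA HLb.
     have [_ [_ [_ [E2 _]]]] := step_unfold (Hs k).
     have S1 := sub_f (S k) HA xb. have S2 := sub_h k HA y.
     have HLk := HLb (bhat k).
     have I : dot (sf (S k)) (vsub xb (bf (S k))) + dot (sh (S k)) (vsub y (bh (S k))) - dot (sh (S k)) (vsub (bf (S k)) (bh (S k)))
       = dot shs (vsub y xb) + dot (vsub (sh (S k)) shs) (vsub y xb) - dot (Dmul d (vsub (bf (S k)) (bhat k))) (vsub xb (bf (S k))).
     { rewrite E2. sumeq. }
     have DL := @dot_lower p (vsub (sh (S k)) shs) (vsub y xb) eps (fun i => Rlt_le _ _ (proj2 (Hcl i))).
     have Y := young (vsub (bf (S k)) (bhat k)) (vsub xb (bf (S k))) 1 Hd.
     have Pa := para xb (bhat k) (bf (S k)) Hd.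
     have I2 : normD2 d (vsub xb (bhat k)) = normD2 d (vsub (bhat k) xb) by sumeq.
     have Hev := v_ge k HA. have He0 := ev_ge0 k HA.
     move: Hv Hev. unfold vk, Mv, hl, ev, Lf in *. move=> Hv Hev. nra.
   + move=> i.
     suff : Rabs (sfs i + shs i) <= 0.
     { move=> hh. have := Rabs_pos (sfs i + shs i). move: hh. unfold Rabs. case: Rcase_abs => ?; lra. }
     apply (le_eps (C := 3)); first lra. move=> eps He. have Hdi := Hd i.
     have Heta : 0 < eps * eps / (d i + 1) by apply Rdiv_lt_0_compat; nra.
     have [N1 HN1] := v_to_0 HA HL Heta.
     have [m [Hm Hcl]] := Hacc eps He (S N1).
     case: m Hm Hcl => [|k] Hm Hcl; first lia.
     have Hv := HN1 k ltac:(lia).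
     have [_ [_ [_ [E2 _]]]] := step_unfold (Hs k).
     have Ei : sf (S k) i + sh (S k) i = - (d i * (bf (S k) i - bhat k i)).
     { rewrite E2 /vsub /vscale /Dmul. ring. }
     have Hev := v_ge k HA. have C : d i * ((bf (S k) i - bhat k i) * (bf (S k) i - bhat k i)) <= normD2 d (vsub (bf (S k)) (bhat k)) := normD2_coord (vsub (bf (S k)) (bhat k)) i Hd.
     unfold ev in Hev.
     have Hdv : d i * vk f h bhat bf bh sh k <= eps * eps.
     { have : d i * vk f h bhat bf bh sh k < (d i + 1) * (eps * eps / (d i + 1)).
       { have := v_ge k HA. have := ev_ge0 k HA. move=> *. 
         apply Rle_lt_trans with ((d i + 1) * vk f h bhat bf bh sh k). nra.
         apply Rmult_lt_compat_l; lra. }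
       replace ((d i + 1) * (eps * eps / (d i + 1))) with (eps * eps) by (field; lra). lra. }
     have Hu : Rabs (d i * (bf (S k) i - bhat k i)) <= eps.
     { apply sq_small => //. nra. }
     have [c1 c2] := Hcl i.
     have T := Rabs_triang (sf (S k) i - sfs i) (sh (S k) i - shs i).
     have T2 := Rabs_triang (- (sf (S k) i - sfs i + (sh (S k) i - shs i))) (- (d i * (bf (S k) i - bhat k i))).
     rewrite Rabs_Ropp in T2. rewrite Rabs_Ropp in T2.
     replace (- (sf (S k) i - sfs i + (sh (S k) i - shs i)) + - (d i * (bf (S k) i - bhat k i))) with (sfs i + shs i) in T2
       by (rewrite -Ei; ring).
     lra.
Qed.
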